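(* Assume (A1) and (A2). Run $\mathrm{BOGD}_{\mathrm{IP}}$ with any step size $\eta>0$, any positive integer block size $K$ dividing $T$, and any tolerance $\epsilon>0$. For any $\mathbf{u}_1,\dots,\mathbf{u}_T\in\mathcal{K}$, writing $s(m)=(m-1)K+1$ and $P_T'=\sum_{m=2}^{T/K}\|\mathbf{u}_{s(m-1)}-\mathbf{u}_{s(m)}\|_2$, we have $$\sum_{m=1}^{T/K}\sum_{k=1}^{K}\big\langle\nabla f_{(m-1)K+k}(\mathbf{x}_m),\,\tilde{\mathbf{y}}_m-\mathbf{u}_{s(m)}\big\rangle\le\frac{7}{4\eta}D^2+\frac{\eta}{2}KTG^2+\frac{D}{\eta}P_T'.$$
   Context: Standing assumptions: (A1) $\mathcal{K}\subseteq\mathbb{R}^d$ is convex and compact, contains $\mathbf{0}$, and $\mathcal{K}\subseteq R\mathcal{B}$ where $R\mathcal{B}$ is the closed Euclidean ball of radius $R$ centered at $\mathbf{0}$; set $D=2R$, so $\|\mathbf{x}-\mathbf{x}'\|_2\le D$ for all $\mathbf{x},\mathbf{x}'\in\mathcal{K}$. (A2) Each loss $f_t$ is $G$-Lipschitz on $\mathcal{K}$, and its (sub)gradients satisfy $\|\nabla f_t(\mathbf{x})\|_2\le G$. Infeasible projection oracle $\mathcal{O}_{\mathrm{IP}}(\mathcal{K},\epsilon,\mathbf{x}_0,\mathbf{y}_0)$: given $\epsilon>0$, $\mathbf{x}_0\in\mathcal{K}$, $\mathbf{y}_0\in\mathbb{R}^d$, returns $(\mathbf{x},\tilde{\mathbf{y}})\in\mathcal{K}\times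 R\mathcal{B}$ with $\|\mathbf{x}-\tilde{\mathbf{y}}\|_2\le\sqrt{3\epsilon}$ and $\|\tilde{\mathbf{y}}-\mathbf{z}\|_2\le\|\mathbf{y}_0-\mathbf{z}\|_2$ for all $\mathbf{z}\in\mathcal{K}$. Algorithm $\mathrm{BOGD}_{\mathrm{IP}}$ (step size $\eta$, block size $K$, tolerance $\epsilon$): pick $\mathbf{x}_1\in\mathcal{K}$ arbitrary, $\tilde{\mathbf{y}}_1=\mathbf{x}_1$. Rounds are split into blocks; block $m$ consists of rounds $(m-1)K+1,\dots,mK$. At every round $t$ of block $m$ the algorithm plays $\mathbf{x}_t=\mathbf{x}_m$. At the last round of block $m$ it sets $\mathbf{y}_{m+1}=\tilde{\mathbf{y}}_m-\eta\sum_{r=(m-1)K+1}^{mK}\nabla f_r(\mathbf{x}_m)$ and $(\mathbf{x}_{m+1},\tilde{\mathbf{y}}_{m+1})=\mathcal{O}_{\mathrm{IP}}(\mathcal{K},\epsilon,\mathbf{x}_m,\mathbf{y}_{m+1})$. *)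

(* Defs.v *)
From mathcomp Require Import all_boot all_order all_algebra.
From mathcomp Require Import all_classical all_reals all_analysis.
Set Implicit Arguments. Unset Strict Implicit. Unset Printing Implicit Defensive.
Import Order.TTheory GRing.Theory Num.Theory.
Import numFieldNormedType.Exports.
Local Open Scope ring_scope.
Local Open Scope classical_set_scope.

Definition dotv {R : realType} {d : nat} (u v : 'rV[R]_d) : R :=
  \sum_(i < d) u ord0 i * v ord0 i.
Definition norm2 {R : realType} {d : nat} (u : 'rV[R]_d) : R :=
  Num.sqrt (dotv u u).

Definition convex_set {R : realType} {d : nat} (K : set 'rV[R]_d) : Prop :=
  forall x y (t : R), K x -> K y -> 0 <= t -> t <= 1 ->
    K (t *: x + (1 - t) *: y).

Definition assumption_A1 {R : realType} {d : nat} (K : set 'rV[R]_d) (rad : R)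
  : Prop :=
  [/\ convex_set K, compact K, K 0 & forall x, K x -> norm2 x <= rad].

Definition assumption_A2 {R : realType} {d : nat} (K : set 'rV[R]_d) (G : R)
  (f : nat -> 'rV[R]_d -> R) (grad : nat -> 'rV[R]_d -> 'rV[R]_d) : Prop :=
  forall t, 
    (forall x y, K x -> K y -> `|f t x - f t y| <= G * norm2 (x - y)) /\
    (forall x, K x -> norm2 (grad t x) <= G) /\
    (forall x y, K x -> K y -> f t x + dotv (grad t x) (y - x) <= f t y).

(* Valid output (x, yt) of the infeasible projection oracle O_IP(K, eps, x0, y0) *)
Definition IP_output {R : realType} {d : nat} (K : set 'rV[R]_d) (rad eps : R)
  (x0 y0 x yt : 'rV[R]_d) : Prop :=
  [/\ K x, norm2 yt <= rad, norm2 (x - yt) <= Num.sqrt (3 * eps)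
    & forall z, K z -> norm2 (yt - z) <= norm2 (y0 - z)].

Definition block_grad {R : realType} {d : nat}
  (grad : nat -> 'rV[R]_d -> 'rV[R]_d) (K m : nat) (x : 'rV[R]_d) : 'rV[R]_d :=
  \sum_((m - 1) * K + 1 <= r < m * K + 1) grad r x.

(* x m, yt m (m >= 1, block-indexed) form a run of BOGD_IP over N = T/K blocks:
   x_1 in K, yt_1 = x_1, and for each block m < N the next pair is a valid
   oracle output for y_{m+1} = yt_m - eta * (sum of block-m gradients at x_m). *)
Definition BOGD_IP_run {R : realType} {d : nat} (Kset : set 'rV[R]_d)
  (rad eps eta : R) (K N : nat) (grad : nat -> 'rV[R]_d -> 'rV[R]_d)
  (x yt : nat -> 'rV[R]_d) : Prop :=
  [/\ Kset (x 1%N), yt 1%N = x 1%N &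
    forall m : nat, (1 <= m)%N -> (m < N)%N ->
      IP_output Kset rad eps (x m) (yt m - eta *: block_grad grad K m (x m))
        (x m.+1) (yt m.+1)].

Definition sblk (K m : nat) : nat := ((m - 1) * K + 1)%N.

(* Main.v *)
Require Import Defs.
From mathcomp Require Import all_boot all_order all_algebra.
From mathcomp Require Import all_classical all_reals all_analysis.
From mathcomp Require Import ring lra zify.
Import Order.TTheory GRing.Theory Num.Theory.
Import numFieldNormedType.Exports.
Local Open Scope ring_scope.
Local Open Scope classical_set_scope.

Section Vec.
Set Implicit Arguments.
Context {R : realType} {d : nat}.
Implicit Types u v w a b c : 'rV[R]_d.
Local Notation dot := (@dotv R d).
Local Notation nrm := (@norm2 R d).

Lemma dotvC u v : dot u v = dot v u.
Proof. by apply: eq_bigr => i _; rewrite mulrC. Qed.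

Lemma dotvDl u w v : dot (u + w) v = dot u v + dot w v.
Proof. by rewrite /dotv -big_split; apply: eq_bigr => i _; rewrite mxE mulrDl. Qed.

Lemma dotvZl (s : R) u v : dot (s *: u) v = s * dot u v.
Proof. by rewrite /dotv mulr_sumr; apply: eq_bigr => i _; rewrite mxE mulrA. Qed.

Lemma dotvNl u v : dot (- u) v = - dot u v.
Proof. by rewrite -scaleN1r dotvZl mulN1r. Qed.

Lemma dotvBl u w v : dot (u - w) v = dot u v - dot w v.
Proof. by rewrite dotvDl dotvNl. Qed.

Lemma dotvDr u w v : dot v (u + w) = dot v u + dot v w.
Proof. by rewrite dotvC dotvDl !(dotvC v). Qed.

Lemma dotvZr (s : R) u v : dot v (s *: u) = s * dot v u.
Proof. by rewrite dotvC dotvZl dotvC. Qed.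

Lemma dotvNr u v : dot v (- u) = - dot v u.
Proof. by rewrite dotvC dotvNl dotvC. Qed.

Lemma dotvBr u w v : dot v (u - w) = dot v u - dot v w.
Proof. by rewrite dotvDr dotvNr. Qed.

Lemma dot0l v : dot 0 v = 0.
Proof. by rewrite /dotv big1 // => i _; rewrite mxE mul0r. Qed.

Lemma dotv_suml I (r : seq I) (P : pred I) (F : I -> 'rV[R]_d) v :
  dot (\sum_(i <- r | P i) F i) v = \sum_(i <- r | P i) dot (F i) v.
Proof.
elim/big_rec2: _ => [|i y1 y2 _ IH]; first by rewrite dot0l.
by rewrite dotvDl IH.
Qed.

Lemma dotv_ge0 u : 0 <= dot u u.
Proof. by apply: sumr_ge0 => i _; rewrite -expr2 sqr_ge0. Qed.

Lemma norm2_ge0 u : 0 <= nrm u.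
Proof. exact: sqrtr_ge0. Qed.

Lemma norm2_sq u : nrm u ^+ 2 = dot u u.
Proof. exact: sqr_sqrtr (dotv_ge0 u). Qed.

Lemma dotv_eq0 u v : dot u u = 0 -> dot u v = 0.
Proof.
move=> H.
have H0 : forall i, true -> u ord0 i * u ord0 i = 0.
  by apply: psumr_eq0P H => i _; rewrite -expr2 sqr_ge0.
rewrite /dotv big1 // => i _.
have /eqP : u ord0 i * u ord0 i = 0 by apply: H0.
by rewrite mulf_eq0 orbb => /eqP ->; rewrite mul0r.
Qed.

Lemma le_sq_nonneg (x y : R) : 0 <= y -> x ^+ 2 <= y ^+ 2 -> x <= y.
Proof. move=> y0 H; nra. Qed.

Lemma CS u v : dot u v <= nrm u * nrm v.
Proof.
have [Q0|Qp] : dot u u = 0 \/ 0 < dot u u.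
  have := dotv_ge0 u; rewrite le_eqVlt => /orP[/eqP <-|->]; [by left|by right].
  by rewrite dotv_eq0 // mulr_ge0 // norm2_ge0.
have key : dot u v ^+ 2 <= dot u u * dot v v.
  set t := dot u v / dot u u.
  have := dotv_ge0 (v - t *: u).
  rewrite dotvBl !dotvBr !dotvZl !dotvZr (dotvC v u) => H.
  have tQ : t * dot u u = dot u v by rewrite /t divfK // gt_eqF.
  have := mulr_ge0 (ltW Qp) H.
  nra.
rewrite -(norm2_sq u) -(norm2_sq v) -exprMn in key.
by apply: le_sq_nonneg key; rewrite mulr_ge0 // norm2_ge0.
Qed.


Lemma norm2D u w : nrm (u + w) <= nrm u + nrm w.
Proof.
apply: le_sq_nonneg; first by rewrite addr_ge0 // norm2_ge0.
rewrite norm2_sq dotvDl !dotvDr (dotvC w u) -(norm2_sq u) -(norm2_sq w).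
have := CS u w; nra.
Qed.

Lemma norm2N u : nrm (- u) = nrm u.
Proof. by rewrite /norm2 dotvNl dotvNr opprK. Qed.

Lemma norm2_0 : nrm 0 = 0.
Proof. by rewrite /norm2 dot0l sqrtr0. Qed.

Lemma norm2_sum I (r : seq I) (P : pred I) (F : I -> 'rV[R]_d) :
  nrm (\sum_(i <- r | P i) F i) <= \sum_(i <- r | P i) nrm (F i).
Proof.
elim/big_rec2: _ => [|i y1 y2 _ IH]; first by rewrite norm2_0.
by apply: le_trans (norm2D _ _) _; rewrite lerD2l.
Qed.

Lemma sq_mono (x y : R) : 0 <= x -> x <= y -> x ^+ 2 <= y ^+ 2.
Proof. move=> x0 H; nra. Qed.

Lemma QB a b (s : R) :
  dot (a - s *: b) (a - s *: b) = dot a a - 2 * s * dot b a + s ^+ 2 * dot b b.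
Proof. rewrite dotvBl !dotvBr !dotvZl !dotvZr (dotvC a b); ring. Qed.

Lemma drift a b c (rad : R) : nrm a <= rad -> nrm b <= rad -> nrm c <= rad ->
  dot (a - c) (a - c) <= dot (a - b) (a - b) + 4 * rad * nrm (b - c).
Proof.
move=> Ha Hb Hc.
set p := a - b; set q := a - c.
have E : dot q q - dot p p = dot (q - p) (q + p).
  rewrite (dotvBl q p) (dotvDr _ _ q) (dotvDr _ _ p) (dotvC p q); ring.
have qp : q - p = b - c by rewrite /p /q opprB addrC addrA subrK.
rewrite qp in E.
have h1 : nrm p <= 2 * rad.
  by apply: le_trans (norm2D _ _) _; rewrite norm2N; lra.
have h2 : nrm q <= 2 * rad.
  by apply: le_trans (norm2D _ _) _; rewrite norm2N; lra.
have h3 := CS (b - c) (q + p).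
have h4 := norm2D q p.
have h5 := norm2_ge0 (b - c).
have h6 : nrm (b - c) * nrm (q + p) <= nrm (b - c) * (4 * rad).
  by rewrite ler_wpM2l //; lra.
lra.
Qed.

End Vec.
Theorem lemma5 (R : realType) (d : nat) (Kset : set 'rV[R]_d) (rad G : R)
  (f : nat -> 'rV[R]_d -> R) (grad : nat -> 'rV[R]_d -> 'rV[R]_d)
  (eta eps : R) (K T : nat) (x yt u : nat -> 'rV[R]_d) :
  assumption_A1 Kset rad ->
  assumption_A2 Kset G f grad ->
  0 < eta -> 0 < eps -> (0 < K)%N -> (K %| T)%N ->
  BOGD_IP_run Kset rad eps eta K (T %/ K) grad x yt ->
  (forall t, (1 <= t <= T)%N -> Kset (u t)) ->
  let D := 2 * rad in
  let N := (T %/ K)%N in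
  let PT' := \sum_(2 <= m < N.+1) norm2 (u (sblk K m.-1) - u (sblk K m)) in
  \sum_(1 <= m < N.+1) \sum_(1 <= k < K.+1)
      dotv (grad ((m - 1) * K + k)%N (x m)) (yt m - u (sblk K m))
  <= 7 / (4 * eta) * D ^+ 2 + eta / 2 * K%:R * T%:R * G ^+ 2 + D / eta * PT'.
Proof.
move=> [convK compK Kz Kball] A2 eta0 eps0 K0 KdT [Kx1 yt1 step] uK.
cbv zeta.
set N := (T %/ K)%N in step *.
set PT' := \sum_(2 <= m < N.+1) _.
have TNK : T = (N * K)%N by rewrite /N divnK.
have rad0 : 0 <= rad := le_trans (norm2_ge0 0) (Kball 0 Kz).
have G0 : 0 <= G := le_trans (norm2_ge0 _) ((A2 0%N).2.1 _ Kx1).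
pose g m := block_grad grad K m (x m).
pose v m := u (sblk K m).
pose c m := dotv (g m) (yt m - v m).
pose A m := dotv (yt m - v m) (yt m - v m).
pose dl m := norm2 (v m - v m.+1).
have xK : forall m, (1 <= m <= N)%N -> Kset (x m).
  case=> [|[|m]] /andP[_ Hm] //.
  by case: (step m.+1 isT Hm).
have ytB : forall m, (1 <= m <= N)%N -> norm2 (yt m) <= rad.
  case=> [|[|m]] /andP[_ Hm] //.
  all: try (by rewrite yt1; apply: Kball).
  by case: (step m.+1 isT Hm).
have vK : forall m, (1 <= m <= N)%N -> Kset (v m).
  move=> m /andP[m1 mN]; apply: uK; rewrite /sblk TNK; apply/andP; split.
    by rewrite addn1.
  have : ((m - 1) * K <= (N - 1) * K)%N by rewrite leq_mul2r; apply/orP; right; lia.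
  rewrite mulnBl mul1n => H.
  have : (K <= N * K)%N by rewrite leq_pmull //; lia.
  lia.
have vB : forall m, (1 <= m <= N)%N -> norm2 (v m) <= rad.
  by move=> m Hm; apply: Kball; apply: vK.
have gB : forall m, (1 <= m <= N)%N -> dotv (g m) (g m) <= K%:R ^+ 2 * G ^+ 2.
  move=> m Hm.
  have H : norm2 (g m) <= K%:R * G.
    apply: le_trans (norm2_sum _ _ _) _.
    apply: le_trans (ler_sum _ (fun r _ => ((A2 r).2.1 _ (xK m Hm)))) _.
    rewrite sumr_const_nat -mulr_natl.
    have -> : (m * K + 1 - ((m - 1) * K + 1) = K)%N.
      case/andP: Hm; case: m => // m _ _.
      rewrite subn1 /= mulSn; lia.
    by rewrite mulr1 mulr_natl.
  rewrite -norm2_sq -exprMn; apply: sq_mono H; exact: norm2_ge0.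
have LHSe : forall m, (1 <= m)%N ->
    \sum_(1 <= k < K.+1) dotv (grad ((m - 1) * K + k)%N (x m)) (yt m - u (sblk K m))
    = c m.
  case=> // m _.
  rewrite /c /g /block_grad dotv_suml addnC big_addn.
  have -> : (m.+1 * K + 1 - (m.+1 - 1) * K = K.+1)%N.
    rewrite subn1 /= mulSn; lia.
  by apply: eq_bigr => i _; rewrite addnC.
rewrite (eq_big_nat _ _ (F2 := c)); last by move=> m /andP[m1 _]; apply: LHSe.
have H1 : forall m, (1 <= m)%N -> (m < N)%N ->
    2 * eta * c m <= A m - A m.+1 + 4 * rad * dl m + eta ^+ 2 * (K%:R ^+ 2 * G ^+ 2).
  move=> m m1 mN.
  have HmN : (1 <= m <= N)%N by rewrite m1 ltnW.
  have Hm1N : (1 <= m.+1 <= N)%N by rewrite mN.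
  case: (step m m1 mN) => _ _ _ proj.
  have P1 := proj (v m) (vK m HmN).
  have P2 : dotv (yt m.+1 - v m) (yt m.+1 - v m)
      <= dotv (yt m - v m - eta *: g m) (yt m - v m - eta *: g m).
    rewrite -!norm2_sq; apply: sq_mono; first exact: norm2_ge0.
    by rewrite addrAC.
  rewrite QB in P2.
  have P3 := @drift _ _ _ _ _ _ (ytB _ Hm1N) (vB _ HmN) (vB _ Hm1N).
  have P4 := gB m HmN.
  have P5 : eta ^+ 2 * dotv (g m) (g m) <= eta ^+ 2 * (K%:R ^+ 2 * G ^+ 2).
    by rewrite ler_wpM2l // sqr_ge0.
  rewrite /A /c /dl; lra.
have H3 : forall m, (1 <= m <= N)%N ->
    2 * eta * c m <= A m + eta ^+ 2 * (K%:R ^+ 2 * G ^+ 2).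
  move=> m Hm.
  have P := dotv_ge0 (yt m - v m - eta *: g m).
  rewrite QB in P.
  have P5 : eta ^+ 2 * dotv (g m) (g m) <= eta ^+ 2 * (K%:R ^+ 2 * G ^+ 2).
    by rewrite ler_wpM2l ?gB // sqr_ge0.
  rewrite /A /c; lra.
have tele : forall n, (n < N)%N ->
    \sum_(1 <= m < n.+1) 2 * eta * c m <=
    A 1%N - A n.+1 + 4 * rad * \sum_(1 <= m < n.+1) dl m
      + n%:R * (eta ^+ 2 * (K%:R ^+ 2 * G ^+ 2)).
  elim=> [|n IH] Hn.
    by rewrite !big_geq // mul0r mulr0 subrr !addr0.
  rewrite !(big_nat_recr n.+1) //=.
  have := IH (ltnW Hn); have := H1 n.+1 isT Hn.
  rewrite -natr1 mulrDl mul1r mulrDr; lra.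
have PTe : PT' = \sum_(1 <= m < N) dl m.
  by rewrite /PT' big_add1 /=.
have PT0 : 0 <= PT' by apply: sumr_ge0 => m _; exact: norm2_ge0.
have main : (\sum_(1 <= m < N.+1) c m) * (2 * eta) <=
    (2 * rad) ^+ 2 + 4 * rad * PT' + N%:R * (eta ^+ 2 * (K%:R ^+ 2 * G ^+ 2)).
  move: PTe tele H3; case HN: N => [|n] PTe tele H3.
    rewrite big_geq // mul0r mul0r addr0.
    have := mulr_ge0 rad0 PT0; have := sqr_ge0 (2 * rad); clear; lra.
  have N1 : (1 <= 1 <= N)%N by rewrite HN.
  have Nn : (1 <= n.+1 <= n.+1)%N by rewrite leqnn.
  have A1 : A 1%N <= (2 * rad) ^+ 2.
    rewrite /A -norm2_sq; apply: sq_mono; first exact: norm2_ge0.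
    apply: le_trans (norm2D _ _) _.
    rewrite norm2N; have := ytB _ N1; have := vB _ N1; lra.
  rewrite big_nat_recr //= mulrDl.
  have T1 := tele n (ltnSn n); have T2 := H3 _ Nn.
  rewrite -mulr_sumr -PTe in T1.
  rewrite -natr1 mulrDl mul1r.
  clear -T1 T2 A1; lra.
have eta2 : 0 < 2 * eta by rewrite mulr_gt0.
have main2 : \sum_(1 <= m < N.+1) c m <= ((2 * rad) ^+ 2 + 4 * rad * PT' +
    N%:R * (eta ^+ 2 * (K%:R ^+ 2 * G ^+ 2))) / (2 * eta).
  by rewrite ler_pdivlMr.
apply: le_trans main2 _.
rewrite ler_pdivrMr // TNK natrM.
have E : (7 / (4 * eta) * (2 * rad) ^+ 2 + eta / 2 * K%:R * (N%:R * K%:R) * G ^+ 2 +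
    2 * rad / eta * PT') * (2 * eta)
    = 7 / 2 * (2 * rad) ^+ 2 + eta ^+ 2 * K%:R * (N%:R * K%:R) * G ^+ 2 + 4 * rad * PT'.
  by field; rewrite gt_eqF.
rewrite E; have := sqr_ge0 rad; have := main; clear; lra.
Qed.
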